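(* Let $\Phi: H_n\to H_k$ be a trace-preserving unital linear map and let $\rho\in H_n\otimes H_m$ be Hermitian. Then \[ {\rm Tr}\left[\left((\Phi\otimes\mathrm{id})(\rho)\right)^2\right]\leq\left(\frac1k-\frac{\|A_\Phi\|_\infty}{n}\right){\rm Tr}\left[\rho_K^2\right]+\|A_\Phi\|_\infty\,{\rm Tr}\left[\rho^2\right], \] where $\mathrm{id}$ is the identity map on $H_m$ and $\rho_K={\rm Tr}_{H_n}[\rho]\in H_m$ is the partial trace over the first factor.
   Context: $H_n$ is the real vector space of $n\times n$ Hermitian matrices with inner product ${\rm Tr}(XY)$, and $H_{n,0}$ its subspace of traceless matrices. A linear map $\Phi:H_n\to H_k$ is unital if $\Phi(I_n/n)=I_k/k$. Fix an orthonormal basis $M_1,\dots,M_{n^2-1}$ of $H_{n,0}$ and define the real symmetric positive semidefinite matrix $A_\Phi$ by $(A_\Phi)_{i,j}={\rm Tr}[\Phi(M_i)\Phi(M_j)]$, $1\le i,j\le n^2-1$; $\|A_\Phi\|_\infty$ is its largest eigenvalue (independent of the chosen basis). *)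

(* Defs.v *)
From HB Require Import structures.
From mathcomp Require Import all_boot all_order all_algebra.
From mathcomp Require Import sesquilinear spectral.
Set Implicit Arguments. Unset Strict Implicit. Unset Printing Implicit Defensive.
Import Order.TTheory GRing.Theory Num.Theory.
Local Open Scope ring_scope.
Local Open Scope sesquilinear_scope.

Definition herm {C : numClosedFieldType} {n : nat} (A : 'M[C]_n) : Prop :=
  A \is hermsymmx.

Definition ctr {C : numClosedFieldType} {n m : nat} (A : 'M[C]_(n, m)) : 'M[C]_(m, n) :=
  A ^t*.

(* Tensor product H_n (x) H_m realised on 'I_(n*m), with the pair (a, i)
   (a : 'I_n first factor, i : 'I_m second factor) indexed by mxvec_index a i. *)
Definition tunindex (n m : nat) (p : 'I_(n * m)) : 'I_n * 'I_m :=
  enum_val (cast_ord (esym (mxvec_cast n m)) p).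

Definition blk {C : numClosedFieldType} {n m : nat} (rho : 'M[C]_(n * m))
  (i j : 'I_m) : 'M[C]_n :=
  \matrix_(a, b) rho (mxvec_index a i) (mxvec_index b j).

Definition ptrace1 {C : numClosedFieldType} {n m : nat} (rho : 'M[C]_(n * m)) : 'M[C]_m :=
  \matrix_(i, j) \sum_(a < n) rho (mxvec_index a i) (mxvec_index a j).

(* A real-linear map Phi : H_n -> H_k (given as a function on all matrices,
   only its values on Hermitian matrices matter) extended complex-linearly to
   M_n : Phi_C X = Phi(Re X) + i Phi(Im X), with Re X = (X + X^* )/2,
   Im X = (X - X^* )/(2i). *)
Definition cext {C : numClosedFieldType} {n k : nat} (Phi : 'M[C]_n -> 'M[C]_k)
  (X : 'M[C]_n) : 'M[C]_k :=
  Phi ((2%:R)^-1 *: (X + ctr X)) + 'i *: Phi ((2%:R * 'i)^-1 *: (X - ctr X)).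

Definition tens_id {C : numClosedFieldType} {n k m : nat} (Phi : 'M[C]_n -> 'M[C]_k)
  (rho : 'M[C]_(n * m)) : 'M[C]_(k * m) :=
  \matrix_(p, q) cext Phi (blk rho (tunindex p).2 (tunindex q).2)
                    (tunindex p).1 (tunindex q).1.

Definition herm_linear {C : numClosedFieldType} {n k : nat} (Phi : 'M[C]_n -> 'M[C]_k) : Prop :=
  (forall X : 'M[C]_n, herm X -> herm (Phi X)) /\
  (forall (a : C) (X Y : 'M[C]_n), a \is Num.real -> herm X -> herm Y ->
     Phi (a *: X + Y) = a *: Phi X + Phi Y).

Definition trace_preserving {C : numClosedFieldType} {n k : nat} (Phi : 'M[C]_n -> 'M[C]_k) : Prop :=
  forall X : 'M[C]_n, herm X -> \tr (Phi X) = \tr X.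

Definition unital {C : numClosedFieldType} {n k : nat} (Phi : 'M[C]_n -> 'M[C]_k) : Prop :=
  Phi ((n%:R)^-1 *: 1%:M) = (k%:R)^-1 *: 1%:M.

Definition orthonormal_basis_H0 {C : numClosedFieldType} {n : nat}
  (M : 'I_(n ^ 2 - 1) -> 'M[C]_n) : Prop :=
  (forall i, herm (M i) /\ \tr (M i) = 0) /\
  (forall i j, \tr (M i *m M j) = (i == j)%:R) /\
  (forall X : 'M[C]_n, herm X -> \tr X = 0 ->
     exists c : 'I_(n ^ 2 - 1) -> C,
       (forall i, c i \is Num.real) /\ X = \sum_i c i *: M i).

Definition A_Phi {C : numClosedFieldType} {n k : nat} (Phi : 'M[C]_n -> 'M[C]_k)
  (M : 'I_(n ^ 2 - 1) -> 'M[C]_n) : 'M[C]_(n ^ 2 - 1) :=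
  \matrix_(i, j) \tr (Phi (M i) *m Phi (M j)).

Definition largest_eigenvalue {C : numClosedFieldType} {N : nat} (A : 'M[C]_N) (lam : C) : Prop :=
  eigenvalue A lam /\ (forall mu, eigenvalue A mu -> mu <= lam).

(* Main.v *)
Require Import Defs.
From HB Require Import structures.
From mathcomp Require Import all_boot all_order all_algebra.
From mathcomp Require Import sesquilinear spectral.
From mathcomp Require Import ring.
Import Order.TTheory GRing.Theory Num.Theory.
Local Open Scope ring_scope.
Local Open Scope sesquilinear_scope.
Set Implicit Arguments. Unset Strict Implicit. Unset Printing Implicit Defensive.
Section S.
Variable C : numClosedFieldType.

Lemma hermE n (X : 'M[C]_n) : herm X <-> X = X ^t*.
Proof.
rewrite /herm; split => [/is_hermitianmxP|H]; first by rewrite expr0 scale1r.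
by apply/is_hermitianmxP; rewrite expr0 scale1r.
Qed.

Lemma ctrE a b (X : 'M[C]_(a, b)) i j : (X ^t*) i j = (X j i)^*.
Proof. by rewrite !mxE. Qed.
Lemma ctrD a b (X Y : 'M[C]_(a, b)) : (X + Y) ^t* = X ^t* + Y ^t*.
Proof. by apply/matrixP => i j; rewrite !mxE rmorphD. Qed.
Lemma ctrN a b (X : 'M[C]_(a, b)) : (- X) ^t* = - X ^t*.
Proof. by apply/matrixP => i j; rewrite !mxE rmorphN. Qed.
Lemma ctrB a b (X Y : 'M[C]_(a, b)) : (X - Y) ^t* = X ^t* - Y ^t*.
Proof. by rewrite ctrD ctrN. Qed.
Lemma ctrZ a b c (X : 'M[C]_(a, b)) : (c *: X) ^t* = c^* *: X ^t*.
Proof. by apply/matrixP => i j; rewrite !mxE rmorphM. Qed.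
Lemma ctr1 a : (1%:M : 'M[C]_a) ^t* = 1%:M.
Proof. by rewrite trmx1 map_mx1. Qed.
Lemma ctrM a b c (X : 'M[C]_(a, b)) (Y : 'M[C]_(b, c)) : (X *m Y) ^t* = Y ^t* *m X ^t*.
Proof. by rewrite trmx_mul map_mxM. Qed.
Lemma tr_ctr a (X : 'M[C]_a) : \tr (X ^t*) = (\tr X)^*.
Proof. by rewrite /mxtrace rmorph_sum; apply: eq_bigr => i _; rewrite !mxE. Qed.

Lemma herm_tr_real a (X : 'M[C]_a) : herm X -> \tr X \is Num.real.
Proof. by move/hermE => H; rewrite CrealE -tr_ctr -H. Qed.

Lemma hermD a (X Y : 'M[C]_a) : herm X -> herm Y -> herm (X + Y).
Proof. by move=> /hermE hx /hermE hy; apply/hermE; rewrite ctrD -hx -hy. Qed.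
Lemma hermZ a c (X : 'M[C]_a) : c \is Num.real -> herm X -> herm (c *: X).
Proof. by move=> cr /hermE hx; apply/hermE; rewrite ctrZ -hx conj_Creal. Qed.
Lemma herm0 a : herm (0 : 'M[C]_a).
Proof. by apply/hermE; apply/matrixP => i j; rewrite !mxE rmorph0. Qed.
Lemma herm1 a : herm (1%:M : 'M[C]_a).
Proof. by apply/hermE; rewrite ctr1. Qed.
Lemma hermN a (X : 'M[C]_a) : herm X -> herm (- X).
Proof. by move=> /hermE hx; apply/hermE; rewrite ctrN -hx. Qed.
Lemma hermB a (X Y : 'M[C]_a) : herm X -> herm Y -> herm (X - Y).
Proof. by move=> hx hy; apply: hermD => //; apply: hermN. Qed.
Lemma herm_sum a (I : finType) (c : I -> C) (F : I -> 'M[C]_a) :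
  (forall i, c i \is Num.real) -> (forall i, herm (F i)) ->
  herm (\sum_i c i *: F i).
Proof.
move=> cr hF; elim/big_ind: _ => //; [exact: herm0 | exact: hermD|].
by move=> i _; apply: hermZ.
Qed.

Lemma tunK a b (i : 'I_a) (j : 'I_b) : tunindex (mxvec_index i j) = (i, j).
Proof. by rewrite /tunindex /mxvec_index cast_ordK enum_rankK. Qed.

Lemma sum_tun a b (G : 'I_a * 'I_b -> C) :
  \sum_(p < a * b) G (tunindex p) = \sum_(i < a) \sum_(j < b) G (i, j).
Proof.
rewrite (reindex (fun x : 'I_a * 'I_b => mxvec_index x.1 x.2)) /=.
  rewrite pair_big /=; apply: eq_bigr => [[i j]] _; by rewrite tunK.
exists (fun p => tunindex p) => [[i j] _ | p _] /=; first by rewrite tunK.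
by case/mxvec_indexP: p => i j; rewrite tunK.
Qed.

Lemma mvK a b (p : 'I_(a * b)) : mxvec_index (tunindex p).1 (tunindex p).2 = p.
Proof. by case/mxvec_indexP: p => i j; rewrite tunK. Qed.

Section PhiL.
Variables (n k : nat) (Phi : 'M[C]_n -> 'M[C]_k).
Hypothesis HL : herm_linear Phi.

Lemma Phi0 : Phi 0 = 0.
Proof.
case: HL => _ L; have := L (-1) 0 0 (ltac:(by rewrite realN real1)) (herm0 _) (herm0 _).
by rewrite scaler0 addr0 scaleN1r addNr.
Qed.
Lemma PhiZ c X : c \is Num.real -> herm X -> Phi (c *: X) = c *: Phi X.
Proof.
case: HL => _ L cr hX; have := L c X 0 cr hX (herm0 _).
by rewrite !addr0 Phi0 addr0.
Qed.
Lemma PhiD X Y : herm X -> herm Y -> Phi (X + Y) = Phi X + Phi Y.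
Proof.
case: HL => _ L hX hY; have := L 1 X Y (ltac:(exact: real1)) hX hY.
by rewrite !scale1r.
Qed.
Lemma PhiN X : herm X -> Phi (- X) = - Phi X.
Proof. by move=> hX; rewrite -scaleN1r PhiZ ?scaleN1r // realN ?real1. Qed.
Lemma Phi_sum (I : finType) (c : I -> C) (F : I -> 'M[C]_n) :
  (forall i, c i \is Num.real) -> (forall i, herm (F i)) ->
  Phi (\sum_i c i *: F i) = \sum_i c i *: Phi (F i).
Proof.
move=> cr hF; rewrite /index_enum; elim: (Finite.enum I) => [|x s IH].
  by rewrite !big_nil Phi0.
rewrite !big_cons PhiD ?IH ?PhiZ //; first by apply: hermZ.
by elim/big_ind: _ => //; [exact: herm0 | exact: hermD| move=> i _; apply: hermZ].
Qed.
End PhiL.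
Lemma Tdecomp d (W V : 'M[C]_d) s : herm W -> herm V -> \tr W = 0 -> \tr V = 0 ->
  \tr ((W + 'i *: V + s *: 1%:M) *m (W + 'i *: V + s *: 1%:M) ^t*) =
  \tr (W *m W) + \tr (V *m V) + d%:R * (s * s^*).
Proof.
move=> /hermE hW /hermE hV tW tV.
rewrite !ctrD !ctrZ ctr1 -hW -hV conjCi.
rewrite !mulmxDl !mulmxDr -!scalemxAl -!scalemxAr !mul1mx !mxtraceD !mxtraceZ.
rewrite !mulmx1 mxtrace1 tW tV (mxtrace_mulC V W) !mulr0 !addr0.
have -> : 'i * (- 'i * \tr (V *m V)) = - ('i ^+ 2) * \tr (V *m V) :> C.
  by ring.
rewrite sqrCi opprK mul1r; ring.
Qed.
Lemma tr_sum a (I : finType) (F : I -> 'M[C]_a) : \tr (\sum_i F i) = \sum_i \tr (F i).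
Proof. by rewrite raddf_sum. Qed.

Lemma rayleigh N (A : 'M[C]_N) lam (w : 'rV[C]_N) :
  A \is hermsymmx -> largest_eigenvalue A lam ->
  (w *m A *m w ^t*) 0 0 <= lam * (w *m w ^t*) 0 0.
Proof.
move=> Ah [_ Hmax].
have /hermitian_normalmx /orthomx_spectralP Aeq := Ah.
set P := spectralmx A in Aeq; set d := spectral_diag A in Aeq.
have Pu : P \is unitarymx by exact: spectral_unitarymx.
have PU : P \in unitmx by exact: spectral_unit.
rewrite invmx_unitary // in Aeq.
have PPt : P *m P ^t* = 1%:M by apply/unitarymxP.
have PtP : P ^t* *m P = 1%:M by rewrite -invmx_unitary // mulVmx.
have dle : forall j, d 0 j <= lam.
  move=> j; apply: Hmax; apply/eigenvalueP; exists (row j P).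
    rewrite -row_mul Aeq !mulmxA PPt mul1mx.
    apply/rowP => l; rewrite !mxE (bigD1 j) //= big1 ?addr0.
      by rewrite !mxE eqxx mulr1n.
    by move=> i /negbTE ij; rewrite !mxE eq_sym ij mulr0n mul0r.
  apply/eqP => /(congr1 (mulmx^~ (P ^t*))); rewrite -row_mul PPt mul0mx.
  move/rowP/(_ j); rewrite !mxE eqxx /= => /eqP; by rewrite oner_eq0.
set u := w *m P ^t*.
have -> : w *m A *m w ^t* = u *m diag_mx d *m u ^t*.
  by rewrite Aeq /u !trmx_mul !map_mxM trmxCK !mulmxA.
have -> : w *m w ^t* = u *m u ^t*.
  by rewrite /u !trmx_mul !map_mxM trmxCK -!mulmxA (mulmxA (P ^t*)) PtP mul1mx.
rewrite mul_mx_diag !mxE mulr_sumr; apply: ler_sum => j _.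
rewrite !mxE; set z := (\sum_(j0 < N) _).
rewrite mulrAC [lam * _]mulrC; apply: ler_wpM2l => //.
by rewrite mul_conjC_ge0.
Qed.

Lemma tr_sum2 a (I : finType) (c : I -> C) (G : I -> 'M[C]_a) :
  \tr ((\sum_i c i *: G i) *m (\sum_i c i *: G i)) =
  \sum_i \sum_j c i * c j * \tr (G i *m G j).
Proof.
rewrite mulmx_suml tr_sum; apply: eq_bigr => i _.
rewrite mulmx_sumr tr_sum; apply: eq_bigr => j _.
by rewrite -scalemxAl -scalemxAr !mxtraceZ mulrA.
Qed.

Section Ray.
Variables (n k : nat) (Phi : 'M[C]_n -> 'M[C]_k) (M : 'I_(n ^ 2 - 1) -> 'M[C]_n) (lam : C).
Hypotheses (HL : herm_linear Phi) (OB : orthonormal_basis_H0 M)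
  (LE : largest_eigenvalue (A_Phi Phi M) lam).

Lemma A_herm : A_Phi Phi M \is hermsymmx.
Proof.
case: HL => HH _; case: OB => hM _.
apply/hermE; apply/matrixP => i j; rewrite !mxE -tr_ctr ctrM.
have /hermE <- := HH _ (proj1 (hM i)); have /hermE <- := HH _ (proj1 (hM j)).
by [].
Qed.

Lemma phi_ray H : herm H -> \tr H = 0 ->
  \tr (Phi H *m Phi H) <= lam * \tr (H *m H).
Proof.
move=> hH tH; case: OB => hM [onM spanM].
have [c [cr ->]] := spanM H hH tH.
rewrite Phi_sum //; last by move=> i; case: (hM i).
set w := \row_i c i.
have := rayleigh w A_herm LE.
have -> : (w *m A_Phi Phi M *m w ^t*) 0 0 =
   \sum_i \sum_j c i * c j * \tr (Phi (M i) *m Phi (M j)).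
  rewrite mxE exchange_big /=; apply: eq_bigr => j _.
  rewrite !mxE mulr_suml; apply: eq_bigr => i _.
  by rewrite !mxE conj_Creal // mulrAC.
have -> : (w *m w ^t*) 0 0 = \sum_i \sum_j c i * c j * \tr (M i *m M j).
  rewrite mxE; apply: eq_bigr => i _.
  rewrite (bigD1 i) //= big1 ?addr0; last first.
    by move=> j /negbTE ji; rewrite onM eq_sym ji mulr0.
  by rewrite !mxE conj_Creal // onM eqxx mulr1.
by rewrite !tr_sum2.
Qed.
End Ray.
Section Key.
Variables (n k : nat) (Phi : 'M[C]_n -> 'M[C]_k) (M : 'I_(n ^ 2 - 1) -> 'M[C]_n) (lam : C).
Hypotheses (n0 : (0 < n)%N) (k0 : (0 < k)%N) (HL : herm_linear Phi)
  (TP : trace_preserving Phi) (UN : unital Phi) (OB : orthonormal_basis_H0 M)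
  (LE : largest_eigenvalue (A_Phi Phi M) lam).

Lemma key X :
  \tr (cext Phi X *m (cext Phi X) ^t*) <=
  ((k%:R)^-1 - lam / n%:R) * (\tr X * (\tr X)^*) + lam * \tr (X *m X ^t*).
Proof.
have nz2 : (2%:R : C) != 0 by rewrite pnatr_eq0.
have nzn : (n%:R : C) != 0 by rewrite pnatr_eq0 -lt0n.
have nzk : (k%:R : C) != 0 by rewrite pnatr_eq0 -lt0n.
have nzi := neq0Ci C.
have r2 : (2%:R : C)^-1 \is Num.real by rewrite realV realn.
have ri2 : ((2%:R * 'i)^-1 : C)^* = - (2%:R * 'i)^-1.
  by rewrite fmorphV /= rmorphM /= rmorph_nat conjCi mulrN invrN.
set H1 := (2%:R)^-1 *: (X + X ^t*).
set H2 := (2%:R * 'i)^-1 *: (X - X ^t*).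
have hH1 : herm H1.
  by apply/hermE; rewrite /H1 ctrZ ctrD trmxCK conj_Creal // addrC.
have hH2 : herm H2.
  by apply/hermE; rewrite /H2 ctrZ ctrB trmxCK ri2 scaleNr -scalerN opprB.
have hX : X = H1 + 'i *: H2.
  apply/matrixP => i j; rewrite /H1 /H2 !mxE; field.
  by [].
set a1 := \tr H1; set a2 := \tr H2.
have ra1 : a1 \is Num.real by apply: herm_tr_real.
have ra2 : a2 \is Num.real by apply: herm_tr_real.
set E := (n%:R)^-1 *: (1%:M : 'M[C]_n).
have hE : herm E by apply: hermZ; [rewrite realV realn | apply: herm1].
have trE : \tr E = 1 by rewrite mxtraceZ mxtrace1 mulVf.
set K1 := H1 - a1 *: E; set K2 := H2 - a2 *: E.
have hK1 : herm K1 by apply: hermB => //; apply: hermZ.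
have hK2 : herm K2 by apply: hermB => //; apply: hermZ.
have tK1 : \tr K1 = 0.
  by rewrite /K1 raddfB /= [\tr (a1 *: E)]mxtraceZ trE mulr1; apply: subrr.
have tK2 : \tr K2 = 0.
  by rewrite /K2 raddfB /= [\tr (a2 *: E)]mxtraceZ trE mulr1; apply: subrr.
case: (HL) => HH L.
have P1 : Phi H1 = a1 *: ((k%:R)^-1 *: 1%:M) + Phi K1.
  by rewrite -UN -L // /K1 addrC subrK.
have P2 : Phi H2 = a2 *: ((k%:R)^-1 *: 1%:M) + Phi K2.
  by rewrite -UN -L // /K2 addrC subrK.
set t := a1 + 'i * a2.
have tX : \tr X = t.
  by rewrite {1}hX mxtraceD [\tr ('i *: _)]mxtraceZ.
have eC : cext Phi X = Phi K1 + 'i *: Phi K2 + (t / k%:R) *: 1%:M.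
  rewrite /cext -/H1 -/H2 P1 P2; apply/matrixP => i j; rewrite !mxE /t; ring.
have eX : X = K1 + 'i *: K2 + (t / n%:R) *: 1%:M.
  rewrite {1}hX /K1 /K2; apply/matrixP => i j; rewrite !mxE /t; ring.
have tG1 : \tr (Phi K1) = 0 by rewrite TP.
have tG2 : \tr (Phi K2) = 0 by rewrite TP.
rewrite eC Tdecomp; [|exact: HH|exact: HH|done|done].
rewrite tX eX Tdecomp //.
have R1 := phi_ray HL OB LE hK1 tK1.
have R2 := phi_ray HL OB LE hK2 tK2.
rewrite !fmorph_div /= !rmorph_nat.
set g1 := \tr (Phi K1 *m Phi K1) in R1 *; set g2 := \tr (Phi K2 *m Phi K2) in R2 *.
set h1 := \tr (K1 *m K1) in R1 *; set h2 := \tr (K2 *m K2) in R2 *.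
have -> : ((k%:R)^-1 - lam / n%:R) * (t * t^*) +
     lam * (h1 + h2 + n%:R * (t / n%:R * (t^* / n%:R))) =
   lam * h1 + lam * h2 + k%:R * (t / k%:R * (t^* / k%:R)).
  by field; rewrite nzk nzn.
by rewrite lerD // lerD.
Qed.
End Key.
Lemma hH1 a (X : 'M[C]_a) : herm ((2%:R)^-1 *: (X + X ^t*)).
Proof.
have r2 : (2%:R : C)^-1 \is Num.real by rewrite realV realn.
by apply/hermE; rewrite ctrZ ctrD trmxCK conj_Creal // addrC.
Qed.
Lemma hH2 a (X : 'M[C]_a) : herm ((2%:R * 'i)^-1 *: (X - X ^t*)).
Proof.
have ri2 : ((2%:R * 'i)^-1 : C)^* = - (2%:R * 'i)^-1.
  by rewrite fmorphV /= rmorphM /= rmorph_nat conjCi mulrN invrN.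
by apply/hermE; rewrite ctrZ ctrB trmxCK ri2 scaleNr -scalerN opprB.
Qed.

Lemma cext_ctr n k (Phi : 'M[C]_n -> 'M[C]_k) X : herm_linear Phi ->
  cext Phi (X ^t*) = (cext Phi X) ^t*.
Proof.
move=> HL; case: (HL) => HH _.
rewrite /cext /ctr trmxCK [X ^t* + X]addrC.
have -> : X ^t* - X = - (X - X ^t*) by rewrite opprB.
rewrite scalerN (PhiN HL); last exact: hH2.
rewrite ctrD ctrZ conjCi.
have /hermE <- := HH _ (hH1 X); have /hermE <- := HH _ (hH2 X).
by rewrite scaleNr scalerN.
Qed.

Lemma TnE a (Z : 'M[C]_a) : \tr (Z *m Z ^t*) = \sum_x \sum_y Z x y * (Z x y)^*.
Proof. by apply: eq_bigr => x _; rewrite mxE; apply: eq_bigr => y _; rewrite !mxE. Qed.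

Lemma sum_tun2 a b (F : 'I_a * 'I_b -> 'I_a * 'I_b -> C) :
  \sum_(p < a * b) \sum_(q < a * b) F (tunindex p) (tunindex q) =
  \sum_(i < b) \sum_(j < b) \sum_(x < a) \sum_(y < a) F (x, i) (y, j).
Proof.
rewrite (sum_tun (fun u => \sum_(q < a * b) F u (tunindex q))).
under eq_bigr do under eq_bigr do rewrite (sum_tun (F _)).
rewrite exchange_big; apply: eq_bigr => i _.
under eq_bigr do rewrite exchange_big.
by rewrite exchange_big.
Qed.
Lemma tens_idE n k m (Phi : 'M[C]_n -> 'M[C]_k) (rho : 'M[C]_(n * m)) p q :
  tens_id Phi rho p q =
  cext Phi (blk rho (tunindex p).2 (tunindex q).2) (tunindex p).1 (tunindex q).1.
Proof. by rewrite /tens_id [LHS]mxE. Qed.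
End S.

Theorem lemma8 (C : numClosedFieldType) (n k m : nat)
  (Phi : 'M[C]_n -> 'M[C]_k) (M : 'I_(n ^ 2 - 1) -> 'M[C]_n)
  (lam : C) (rho : 'M[C]_(n * m)) :
  (0 < n)%N -> (0 < k)%N ->
  herm_linear Phi -> trace_preserving Phi -> unital Phi ->
  orthonormal_basis_H0 M ->
  largest_eigenvalue (A_Phi Phi M) lam ->
  herm rho ->
  \tr (tens_id Phi rho *m tens_id Phi rho) <=
    ((k%:R)^-1 - lam / n%:R) * \tr (ptrace1 rho *m ptrace1 rho)
    + lam * \tr (rho *m rho).
Proof.
move=> n0 k0 HL TP UN OB LE /hermE hrho.
set B := blk rho.
have hB : forall i j, B j i = (B i j) ^t*.
  move=> i j; apply/matrixP => x y; rewrite !mxE {1}hrho !mxE.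
  by [].
have E1 : \tr (tens_id Phi rho *m tens_id Phi rho) =
    \sum_i \sum_j \tr (cext Phi (B i j) *m (cext Phi (B i j)) ^t*).
  pose F := fun u v : 'I_k * 'I_m =>
        cext Phi (B u.2 v.2) u.1 v.1 * cext Phi (B v.2 u.2) v.1 u.1.
  have -> : \tr (tens_id Phi rho *m tens_id Phi rho) =
    \sum_p \sum_q F (tunindex p) (tunindex q).
    by apply: eq_bigr => p _; rewrite mxE; apply: eq_bigr => q _; rewrite !tens_idE.
  rewrite sum_tun2; apply: eq_bigr => i _; apply: eq_bigr => j _.
  rewrite TnE; apply: eq_bigr => x _; apply: eq_bigr => y _; rewrite /F /=.
  by rewrite (hB i j) (cext_ctr _ HL) ctrE.
have E2 : \tr (rho *m rho) = \sum_i \sum_j \tr (B i j *m (B i j) ^t*).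
  pose F := fun u v : 'I_n * 'I_m =>
        rho (mxvec_index u.1 u.2) (mxvec_index v.1 v.2) *
        rho (mxvec_index v.1 v.2) (mxvec_index u.1 u.2).
  have -> : \tr (rho *m rho) =
    \sum_p \sum_q F (tunindex p) (tunindex q).
    by apply: eq_bigr => p _; rewrite mxE; apply: eq_bigr => q _; rewrite /F /= !mvK.
  rewrite sum_tun2; apply: eq_bigr => i _; apply: eq_bigr => j _.
  rewrite TnE; apply: eq_bigr => x _; apply: eq_bigr => y _; rewrite /F /=.
  by rewrite {2}hrho !mxE.
have E3 : \tr (ptrace1 rho *m ptrace1 rho) =
    \sum_i \sum_j (\tr (B i j) * (\tr (B i j))^*).
  apply: eq_bigr => i _; rewrite mxE; apply: eq_bigr => j _.
  have -> : ptrace1 rho i j = \tr (B i j).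
    by rewrite !mxE; apply: eq_bigr => a _; rewrite !mxE.
  have -> : ptrace1 rho j i = \tr (B j i).
    by rewrite !mxE; apply: eq_bigr => a _; rewrite !mxE.
  by rewrite (hB i j) tr_ctr.
rewrite E1 E2 E3 !mulr_sumr -big_split /=; apply: ler_sum => i _.
rewrite !mulr_sumr -big_split /=; apply: ler_sum => j _.
exact: (key n0 k0 HL TP UN OB LE).
Qed.
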